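(* Let $\mathcal G$ be an XOR game with cost matrix $G$, optimal quantum bias $\beta=\beta_q^*(\mathcal G)$, and optimal row and column biases $(r_x)_{x\in I_A}$, $(c_y)_{y\in I_B}$. For $x\in I_A$ put $\hat b_x=\frac1{r_x}\sum_{y\in I_B}G_{xy}b_y\in\mathcal A$. Then there exist real numbers $\lambda_y\ge0$ and $v_{yw}\in\mathbb R$ ($y,w\in I_B$) such that, in $\mathcal A$, \[ \beta\cdot1-h_{\mathcal G}=\sum_{x\in I_A}\frac{r_x}{2}\big(a_x-\hat b_x\big)^2+\sum_{y\in I_B}\frac{\lambda_y}{2}\Big(\sum_{w\in I_B}v_{yw}b_w\Big)^2 . \] In particular $\beta\cdot1-h_{\mathcal G}$ has a nice sum-of-squares decomposition. (One may take $\lambda_y$ and $(v_{yw})_w$ to be the eigenvalues and orthonormal eigenvectors of the positive semidefinite matrix $\Delta(\mathbf c)-G^{T}\Delta(\mathbf r)^{-1}G$.)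
   Context: An XOR game $\mathcal G$ is given by finite question sets $I_A,I_B$, a probability distribution $\pi$ on $I_A\times I_B$ and a function $g:I_A\times I_B\to\{0,1\}$; the players answer bits $a,b$ and win iff $a\oplus b=g(x,y)$. Its cost matrix is the $I_A\times I_B$ matrix $G_{xy}=(-1)^{g(x,y)}\pi(x,y)$. A quantum strategy $S$ consists of finite-dimensional Hilbert spaces $\mathcal H_A,\mathcal H_B$, a unit vector $|\psi\rangle\in\mathcal H_A\otimes\mathcal H_B$ and binary observables (self-adjoint unitaries) $A_x$ on $\mathcal H_A$, $B_y$ on $\mathcal H_B$; its bias is $\beta_q(S,\mathcal G)=\sum_{x,y}G_{xy}\langle\psi|A_x\otimes B_y|\psi\rangle$, and $\beta_q^*(\mathcal G)=\sup_S\beta_q(S,\mathcal G)$ is the optimal quantum bias. Known facts (Tsirelson, Slofstra) used as standing facts: there are optimal strategies; there are numbers $r_x>0$ ($x\in I_A$), the optimal row biases, and $c_y$ ($y\in I_B$), the optimal column biases, such that $r_x=\sum_yG_{xy}\langle\psi|A_x\otimes B_y|\psi\rangle$ and $c_y=\sum_xG_{xy}\langle\psi|A_x\otimes B_y|\psi\rangle$ for every optimal quantum strategy; hence $\sum_xr_x=\sum_yc_y=\beta_q^*(\mathcal G)$; and $(\mathbf r,\mathbf c)$ satisfies $\begin{pmatrix}\Delta(\mathbf r)&-G\\-G^{T}&\Delta(\mathbf c)\end{pmatrix}\succeq0$, where $\Delta(\mathbf r)$, $\Delta(\mathbf c)$ are the diagonal matrices with diagonal entries $r_x$, $c_y$ (indeed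 $(\mathbf r,\mathbf c)$ is optimal for the SDP minimizing $\tfrac12\sum_xr_x+\tfrac12\sum_yc_y$ under this constraint, with optimal value $\beta_q^*(\mathcal G)$). Scenario algebra: $\mathcal A$ is the complex group $*$-algebra of $\mathbb Z_2^{*I_A}\times\mathbb Z_2^{*I_B}$, i.e. generated by self-adjoint unitaries $a_x$ ($x\in I_A$) and $b_y$ ($y\in I_B$) subject only to $a_x^2=b_y^2=1$ and $a_xb_y=b_ya_x$. The bias polynomial is $h_{\mathcal G}=\sum_{x,y}G_{xy}a_xb_y$. A sum-of-squares decomposition is nice if it is a non-negative real linear combination of terms $\big(\sum_y\gamma_yb_y\big)^2$ and $\big(a_x-\sum_y\gamma_{x,y}b_y\big)^2$ with real coefficients. *)

(* Defs.v *)
From HB Require Import structures.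
From mathcomp Require Import all_boot all_order all_algebra.
From mathcomp Require Import reals.
From mathcomp Require Import complex mxtens.

Set Implicit Arguments.
Unset Strict Implicit.
Unset Printing Implicit Defensive.

Import Order.TTheory GRing.Theory Num.Theory.
Local Open Scope ring_scope.

Section XOR.
Variables (R : realType) (IA IB : finType).

(* An XOR game: a probability distribution [pi] on IA x IB and a
   predicate [g]; the players win iff a (+) b = g x y. *)
Record xor_game := XorGame {
  xg_pi : IA -> IB -> R;
  xg_g  : IA -> IB -> bool }.

Definition valid_game (Gm : xor_game) : Prop :=
  (forall x y, 0 <= xg_pi Gm x y) /\
  \sum_(x : IA) \sum_(y : IB) xg_pi Gm x y = 1.

Definition cost (Gm : xor_game) (x : IA) (y : IB) : R :=
  (-1) ^+ xg_g Gm x y * xg_pi Gm x y.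

(* Quantum strategies on C^dA (x) C^dB = C^(dA*dB)  (Kronecker product) *)

Local Notation C := R[i].

Definition adj {m n} (M : 'M[C]_(m, n)) : 'M[C]_(n, m) := (map_mx conjc M)^T.

Record qstrategy := QStrategy {
  dA : nat;
  dB : nat;
  qpsi : 'cV[C]_(dA * dB);
  qA : IA -> 'M[C]_dA;
  qB : IB -> 'M[C]_dB }.

Definition binary_observable {n} (M : 'M[C]_n) : Prop :=
  adj M = M /\ adj M *m M = 1%:M.

Definition is_qstrategy (S : qstrategy) : Prop :=
  (adj (qpsi S) *m qpsi S = 1%:M) /\
  (forall x, binary_observable (qA S x)) /\
  (forall y, binary_observable (qB S y)).

(* <psi| A_x (x) B_y |psi>  (a real number for a strategy; we take Re) *)
Definition corr (S : qstrategy) (x : IA) (y : IB) : C :=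
  (adj (qpsi S) *m (qA S x *t qB S y) *m qpsi S) 0 0.

Definition qbias (Gm : xor_game) (S : qstrategy) : R :=
  complex.Re (\sum_(x : IA) \sum_(y : IB) (cost Gm x y)%:C%C * corr S x y).

Definition row_bias (Gm : xor_game) (S : qstrategy) (x : IA) : R :=
  complex.Re (\sum_(y : IB) (cost Gm x y)%:C%C * corr S x y).

Definition col_bias (Gm : xor_game) (S : qstrategy) (y : IB) : R :=
  complex.Re (\sum_(x : IA) (cost Gm x y)%:C%C * corr S x y).

Definition optimal_strategy (Gm : xor_game) (S : qstrategy) : Prop :=
  is_qstrategy S /\
  forall S' : qstrategy, is_qstrategy S' -> qbias Gm S' <= qbias Gm S.

Definition psd {I : finType} (M : I -> I -> R) : Prop :=
  (forall i j, M i j = M j i) /\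
  forall z : I -> R, 0 <= \sum_(i : I) \sum_(j : I) z i * M i j * z j.

Definition block_mx_rc (Gm : xor_game) (r : IA -> R) (c : IB -> R)
    (i j : IA + IB) : R :=
  match i, j with
  | inl x, inl x' => if x == x' then r x else 0
  | inl x, inr y => - cost Gm x y
  | inr y, inl x => - cost Gm x y
  | inr y, inr y' => if y == y' then c y else 0
  end.

(* The scenario algebra: complex group algebra of                     *)
(*   Z_2^{*IA} x Z_2^{*IB}.                                           *)
(* A group element is a pair of reduced words (no two equal adjacent   *)
(* letters); [nf] computes the reduced form of a word (cancel xx = 1). *)
(* An element of the algebra is a formal finite sum  sum_k c_k w_k     *)
(* (w_k arbitrary word pairs); two such sums are equal in the algebra  *)
(* iff they have the same coefficient at every group element.          *)

End XOR.

Section FreeZ2.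
Variable T : eqType.
Definition nf_step (st : seq T) (x : T) : seq T :=
  if st is y :: st' then (if y == x then st' else x :: st) else [:: x].
Definition nf (s : seq T) : seq T := rev (foldl nf_step [::] s).
End FreeZ2.

Section Scenario.
Variables (R : realType) (IA IB : finType).
Local Notation C := R[i].

Definition word := (seq IA * seq IB)%type.
Definition scen := seq (C * word).

Definition scen_coef (p : scen) (g : word) : C :=
  \sum_(t <- p | (nf t.2.1, nf t.2.2) == g) t.1.

Definition scen_eq (p q : scen) : Prop := forall g : word, scen_coef p g = scen_coef q g.

Definition scen_add (p q : scen) : scen := p ++ q.
Definition scen_scale (k : C) (p : scen) : scen := [seq (k * t.1, t.2) | t <- p].
Definition scen_sub (p q : scen) : scen := scen_add p (scen_scale (-1) q).
Definition scen_mul (p q : scen) : scen :=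
  [seq (s.1 * t.1, (s.2.1 ++ t.2.1, s.2.2 ++ t.2.2)) | s <- p, t <- q].
Definition scen_sq (p : scen) : scen := scen_mul p p.
Definition scen1 : scen := [:: (1, ([::], [::]))].
Definition gen_a (x : IA) : scen := [:: (1, ([:: x], [::]))].
Definition gen_b (y : IB) : scen := [:: (1, ([::], [:: y]))].
Definition scen_sum {I : Type} (s : seq I) (F : I -> scen) : scen :=
  \big[scen_add/[::]]_(i <- s) F i.

Definition bias_poly (Gm : xor_game R IA IB) : scen :=
  scen_sum (enum IA) (fun x => scen_sum (enum IB) (fun y =>
    scen_scale (cost Gm x y)%:C%C (scen_mul (gen_a x) (gen_b y)))).

Definition hat_b (Gm : xor_game R IA IB) (r : IA -> R) (x : IA) : scen :=
  scen_scale ((r x)^-1)%:C%C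
    (scen_sum (enum IB) (fun y => scen_scale (cost Gm x y)%:C%C (gen_b y))).

End Scenario.

(* Main.v *)
Require Import Defs.
From HB Require Import structures.
From mathcomp Require Import all_boot all_order all_algebra.
From mathcomp Require Import reals.
From mathcomp Require Import complex mxtens.
From mathcomp Require Import ring lra.
Import Order.TTheory GRing.Theory Num.Theory.
Local Open Scope ring_scope.


Section Decomp.
Variable R : realType.
Variable I : finType.

Definition qf (M : I -> I -> R) (z : I -> R) := \sum_i \sum_j z i * M i j * z j.

Lemma sum_delta_r (F : I -> R) k : \sum_j F j * (j == k)%:R = F k.
Proof. by rewrite (bigD1 k) //= eqxx mulr1 big1 ?addr0 // => j /negPf ->; rewrite mulr0. Qed.

Lemma qf_shift M z t k : (forall i j, M i j = M j i) ->
  qf M (fun i => z i + t * (i == k)%:R) =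
  qf M z + 2 * t * (\sum_j M k j * z j) + t ^+ 2 * M k k.
Proof.
move=> Ms; rewrite /qf.
transitivity (\sum_i (\sum_j z i * M i j * z j + t * (z i * M i k)
   + t * (\sum_j M i j * z j) * (i == k)%:R + t^+2 * M i k * (i == k)%:R)).
  apply: eq_bigr => i _.
  rewrite (eq_bigr (fun j => z i * M i j * z j + t * (z i * M i j) * (j==k)%:R
     + t * (i==k)%:R * (M i j * z j) + t^+2 * (i==k)%:R * M i j * (j==k)%:R)); last first.
    by move=> j _; ring.
  rewrite !big_split /= !sum_delta_r -mulr_sumr.
  
  by rewrite [t * _ * (i == k)%:R]mulrAC [t^+2 * M i k * _]mulrAC.

rewrite !big_split /= !sum_delta_r -mulr_sumr.

rewrite [\sum_i z i * M i k](eq_bigr (fun j => M k j * z j)); last by move=> j _; rewrite Ms mulrC.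

ring.
Qed.

Lemma qf0 M : qf M (fun _ => 0) = 0.
Proof. by rewrite /qf big1 // => i _; rewrite big1 // => j _; rewrite !mul0r. Qed.

Lemma qf_delta M k : (forall i j, M i j = M j i) ->
  qf M (fun i => 0 + 1 * (i == k)%:R) = M k k.
Proof.
move=> Ms; rewrite qf_shift // qf0 big1 ?mulr0 ?add0r ?expr1n ?mul1r // => j _.
by rewrite mulr0.
Qed.

Lemma psd_diag0 (M : I -> I -> R) k j : psd M -> M k k = 0 -> M k j = 0.
Proof.
move=> [Ms Mp0] Mkk.
have Mp : forall z, 0 <= qf M z := Mp0.
have H t : 0 <= M j j + 2 * t * M k j.
  have := Mp (fun i => (0 + 1 * (i == j)%:R) + t * (i == k)%:R).
  rewrite qf_shift // qf_delta // Mkk mulr0 addr0.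
  rewrite (eq_bigr (fun i => M k i * (i == j)%:R)) ?sum_delta_r //.
  by move=> i _; rewrite add0r mul1r.
apply/eqP; apply/negPn/negP => m0.
have := H (- (M j j + 1) / (2 * M k j)).
have -> : 2 * (- (M j j + 1) / (2 * M k j)) * M k j = - (M j j + 1).
  by field.
lra.
Qed.

Lemma decomp_base (M : I -> I -> R) :
  (forall i j, M i j = 0) ->
  exists (lam : I -> R) (v : I -> I -> R), (forall y, 0 <= lam y) /\
    (forall y, lam y = 0) /\ forall i j, M i j = \sum_y lam y * v y i * v y j.
Proof.
move=> M0; exists (fun _ => 0), (fun _ _ => 0); split=> // ; split=> // i j.
by rewrite M0 big1 // => y _; rewrite !mul0r.
Qed.

Lemma psd_decomp_set n : forall (M : I -> I -> R) (A : {set I}),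
  (#|A| <= n)%N -> psd M -> (forall i j, i \notin A -> M i j = 0) ->
  exists (lam : I -> R) (v : I -> I -> R), (forall y, 0 <= lam y) /\
    (forall y, y \notin A -> lam y = 0) /\
    forall i j, M i j = \sum_y lam y * v y i * v y j.
Proof.
elim: n => [|n IH] M A hA Mpsd M0.
  have A0 : A = set0 by apply/eqP; rewrite -cards_eq0 -leqn0.
  have [lam [v [h1 [h2 h3]]]] : exists (lam : I -> R) (v : I -> I -> R), (forall y, 0 <= lam y) /\
    (forall y, lam y = 0) /\ forall i j, M i j = \sum_y lam y * v y i * v y j.
    by apply: decomp_base => i j; apply: M0; rewrite A0 inE.
  by exists lam, v; split=> //; split.
have [A0|[y0 y0A]] := set_0Vmem A.
  have [lam [v [h1 [h2 h3]]]] : exists (lam : I -> R) (v : I -> I -> R), (forall y, 0 <= lam y) /\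
    (forall y, lam y = 0) /\ forall i j, M i j = \sum_y lam y * v y i * v y j.
    by apply: decomp_base => i j; apply: M0; rewrite A0 inE.
  by exists lam, v; split=> //; split.
have [Ms Mp0] := Mpsd.
have Mp : forall z, 0 <= qf M z := Mp0.
set d := M y0 y0.
have d0 : 0 <= d by rewrite /d -(qf_delta M y0 Ms); apply: Mp.
have Hrow j : d = 0 -> M y0 j = 0 by move=> dz; apply: psd_diag0.
pose M' i j := M i j - d^-1 * M i y0 * M y0 j.
have M's : forall i j, M' i j = M' j i.
  move=> i j; rewrite /M' [M j i]Ms [M j y0]Ms [M y0 i]Ms; ring.
have M'p : psd M'.
  split=> // z; change (0 <= qf M' z).
  have [dz|dnz] := eqVneq d 0.
    have -> : qf M' z = qf M z.
      by apply: eq_bigr => i _; apply: eq_bigr => j _; rewrite /M' dz invr0 !mul0r subr0.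
    exact: Mp.
  set s := \sum_j M y0 j * z j.
  have E1 : qf M' z = qf M z - d^-1 * s ^+ 2.
    rewrite /qf.
    transitivity (\sum_i \sum_j z i * M i j * z j -
        \sum_i \sum_j (d^-1 * (z i * M y0 i)) * (M y0 j * z j)).
      rewrite -sumrB; apply: eq_bigr => i _; rewrite -sumrB; apply: eq_bigr => j _.
      rewrite /M' [M i y0]Ms; ring.
    congr (_ - _); rewrite -big_distrlr /= -mulr_sumr.
    rewrite (eq_bigr (fun i => M y0 i * z i)); last by move=> i _; rewrite mulrC.
    by rewrite -/s expr2 mulrA.
  have := Mp (fun i => z i + (- d^-1 * s) * (i == y0)%:R).
  rewrite qf_shift // -/s -/d => H.
  rewrite E1; suff <- : qf M z + 2 * (- d^-1 * s) * s + (- d^-1 * s) ^+ 2 * d =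
      qf M z - d^-1 * s ^+ 2 by [].
  by field.
have M'0 : forall i j, i \notin A :\ y0 -> M' i j = 0.
  move=> i j; rewrite in_setD1 negb_and negbK.
  have [->|_] /= := eqVneq i y0.
    move=> _; rewrite /M' -/d.
    have [dz|dnz] := eqVneq d 0; first by rewrite (Hrow j dz) mulr0 subr0.
    by rewrite mulVf // mul1r subrr.
  by move=> iA; rewrite /M' (M0 i j iA) (M0 i y0 iA) mulr0 mul0r subr0.
have hA' : (#|A :\ y0| <= n)%N.
  by move: hA; rewrite (cardsD1 y0 A) y0A.
have [lam [v [h1 [h2 h3]]]] := IH M' (A :\ y0) hA' M'p M'0.
have l0 : lam y0 = 0 by apply: h2; rewrite setD11.
exists (fun y => if y == y0 then d^-1 else lam y), (fun y => if y == y0 then M y0 else v y).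
split; first by move=> y; case: eqP => _ //; rewrite invr_ge0.
split.
  move=> y yA; have [ey|ny] := eqVneq y y0; first by rewrite ey y0A in yA.
  by apply: h2; rewrite in_setD1 ny.
move=> i j; rewrite (bigD1 y0) //= eqxx.
rewrite (eq_bigr (fun y => lam y * v y i * v y j)); last first.
  by move=> y /negPf ->.
have := h3 i j; rewrite (bigD1 y0) //= l0 !mul0r add0r => <-.
rewrite /M' [M i y0]Ms; ring.
Qed.

Lemma psd_decomp (M : I -> I -> R) : psd M ->
  exists (lam : I -> R) (v : I -> I -> R), (forall y, 0 <= lam y) /\
    forall i j, M i j = \sum_y lam y * v y i * v y j.
Proof.
move=> Mp.
have h0 : forall i j, i \notin [set: I] -> M i j = 0 by move=> i j; rewrite inE.
have [lam [v [h1 [_ h3]]]] := @psd_decomp_set #|I| M setT (max_card _) Mp h0.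
by exists lam, v.
Qed.
End Decomp.

Section Coef.
Variables (R : realType) (IA IB : finType).
Local Notation C := R[i].
Local Notation scen := (scen R IA IB).
Local Notation word := (word IA IB).

Definition ind (w g : word) : C := ((nf w.1, nf w.2) == g)%:R.

Lemma coefE (p : scen) g : scen_coef p g = \sum_(t <- p) t.1 * ind t.2 g.
Proof.
rewrite /scen_coef big_mkcond; apply: eq_bigr => t _.
by rewrite /ind; case: eqP => _; rewrite ?mulr1 ?mulr0.
Qed.

Lemma coef_add (p q : scen) g : scen_coef (scen_add p q) g = scen_coef p g + scen_coef q g.
Proof. by rewrite !coefE big_cat. Qed.

Lemma coef_scale k (p : scen) g : scen_coef (scen_scale k p) g = k * scen_coef p g.
Proof. by rewrite !coefE big_map mulr_sumr; apply: eq_bigr => t _; rewrite mulrA. Qed.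

Lemma coef_sum (J : Type) (s : seq J) (F : J -> scen) g :
  scen_coef (scen_sum s F) g = \sum_(j <- s) scen_coef (F j) g.
Proof.
elim: s => [|a s IH]; first by rewrite /scen_sum !big_nil coefE big_nil.
by rewrite /scen_sum !big_cons coef_add -IH.
Qed.

Lemma coef_mul (p q : scen) g : scen_coef (scen_mul p q) g =
  \sum_(s <- p) \sum_(t <- q) s.1 * t.1 * ind (s.2.1 ++ t.2.1, s.2.2 ++ t.2.2) g.
Proof. by rewrite coefE /scen_mul big_allpairs_dep. Qed.

Lemma sum_single (J : Type) (s : seq J) (f : J -> C * word) :
  scen_sum s (fun j => [:: f j]) = map f s.
Proof.
elim: s => [|a s IH]; first by rewrite /scen_sum big_nil.
by rewrite /scen_sum big_cons -/(scen_sum s _) IH.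
Qed.

Lemma nf0 (T : eqType) : nf ([::] : seq T) = [::]. Proof. by []. Qed.
Lemma nf1 (T : eqType) (x : T) : nf [:: x] = [:: x]. Proof. by []. Qed.
Lemma nf2 (T : eqType) (x : T) : nf [:: x; x] = [::]. Proof. by rewrite /nf /= eqxx. Qed.


Local Open Scope complex_scope.
Lemma lin_a (Gm : xor_game R IA IB) r x :
  scen_sub (gen_a R IB x) (hat_b Gm r x) = (1, ([:: x], [::])) ::
   [seq (-1 * (((r x)^-1)%:C * ((cost Gm x y)%:C * 1)), ([::], [:: y])) | y <- enum IB].
Proof.
rewrite /scen_sub /hat_b /scen_add.
have -> : scen_sum (enum IB) (fun y => scen_scale (cost Gm x y)%:C (gen_b R IA y)) =
   [seq ((cost Gm x y)%:C * 1, (([::] : seq IA), [:: y])) | y <- enum IB].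
  by rewrite -sum_single /scen_sum; apply: eq_bigr => y _.
by rewrite /scen_scale -!map_comp.
Qed.

Lemma lin_b (v : IB -> R) :
  scen_sum (enum IB) (fun w => scen_scale (v w)%:C (gen_b R IA w)) =
  [seq ((v w)%:C * 1, (([::] : seq IA), [:: w])) | w <- enum IB].
Proof. by rewrite -sum_single /scen_sum; apply: eq_bigr => y _. Qed.

Lemma coef_sq_b (k : IB -> C) g :
  scen_coef (scen_sq [seq (k w, (([::] : seq IA), [:: w])) | w <- enum IB]) g =
  \sum_w \sum_w' k w * k w' * ind (([::] : seq IA), [:: w; w']) g.
Proof.
rewrite /scen_sq coef_mul big_map big_enum /=; apply: eq_bigr => w _.
by rewrite big_map big_enum.
Qed.

Lemma ind_xx (x : IA) g : ind ([:: x; x], [::]) g = ind ([::], [::]) g.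
Proof. by rewrite /ind nf2. Qed.

Lemma coef_sq_a x (k : IB -> C) g :
  scen_coef (scen_sq ((1, ([:: x], [::])) :: [seq (k y, (([::] : seq IA), [:: y])) | y <- enum IB])) g =
  ind ([::], [::]) g + 2 * \sum_y k y * ind ([:: x], [:: y]) g +
  \sum_y \sum_y' k y * k y' * ind (([::] : seq IA), [:: y; y']) g.
Proof.
rewrite /scen_sq coef_mul big_cons big_cons big_map big_enum /= big_map big_enum /=.
have H1 i : \sum_(t <- (1, ([:: x], [::])) :: [seq (k y, (([::] : seq IA), [:: y])) | y <- enum IB])
     k i * t.1 * ind (t.2.1, i :: t.2.2) g =
   k i * ind ([:: x], [:: i]) g + \sum_y' k i * k y' * ind (([::] : seq IA), [:: i; y']) g.
  by rewrite big_cons big_map big_enum /= mulr1.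
rewrite (eq_bigr _ (fun i _ => H1 i)) big_split /= ind_xx !mul1r.
rewrite (eq_bigr (fun y => k y * ind ([:: x], [:: y]) g)); last by move=> y _; rewrite mul1r.
by rewrite mulr2n mulrDl mul1r !addrA.
Qed.
End Coef.
Arguments ind {R IA IB}.

Lemma final_alg (F : numFieldType) (IA IB : finType) (beta : F) (rho : IA -> F)
  (c : IB -> F) (G : IA -> IB -> F) (lam : IB -> F) (v : IB -> IB -> F)
  (E : F) (P : IA -> IB -> F) (Q : IB -> IB -> F) :
  beta = \sum_x rho x -> beta = \sum_y c y -> (forall x, rho x != 0) ->
  (forall w, Q w w = E) ->
  (forall w w', (w == w')%:R * c w - \sum_x G x w * G x w' * (rho x)^-1 =
                \sum_y lam y * v y w * v y w') ->
  beta * E - \sum_x \sum_y G x y * P x y =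
  \sum_x (rho x / 2) * (E + 2 * \sum_y (-1 * ((rho x)^-1 * (G x y * 1))) * P x y
      + \sum_y \sum_y' (-1 * ((rho x)^-1 * (G x y * 1))) * (-1 * ((rho x)^-1 * (G x y' * 1))) * Q y y')
  + \sum_y (lam y / 2) * \sum_w \sum_w' (v y w * 1) * (v y w' * 1) * Q w w'.
Proof.
move=> hb hc hr hQ hdec.
have two : (2 : F) != 0 by rewrite pnatr_eq0.
rewrite [in RHS](eq_bigr (fun x => rho x / 2 * E +
   rho x / 2 * (2 * \sum_y (-1 * ((rho x)^-1 * (G x y * 1))) * P x y) +
   rho x / 2 * \sum_y \sum_y' (-1 * ((rho x)^-1 * (G x y * 1))) * (-1 * ((rho x)^-1 * (G x y' * 1))) * Q y y'));
  last by move=> x _; rewrite !mulrDr.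
rewrite [in RHS]big_split [in RHS]big_split /=.
have Ha : \sum_x rho x / 2 * E = beta / 2 * E by rewrite -!mulr_suml hb.
have Hb : \sum_x rho x / 2 * (2 * \sum_y (-1 * ((rho x)^-1 * (G x y * 1))) * P x y)
    = - \sum_x \sum_y G x y * P x y.
  rewrite -sumrN; apply: eq_bigr => x _; rewrite -sumrN mulrA mulr_sumr.
  by apply: eq_bigr => y _; field; rewrite hr.
have Hc : \sum_x rho x / 2 * \sum_y \sum_y' (-1 * ((rho x)^-1 * (G x y * 1))) *
     (-1 * ((rho x)^-1 * (G x y' * 1))) * Q y y'
   = \sum_y \sum_y' (Q y y' / 2) * \sum_x G x y * G x y' * (rho x)^-1.
  transitivity (\sum_x \sum_y \sum_y' (Q y y' / 2) * (G x y * G x y' * (rho x)^-1)).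
    apply: eq_bigr => x _; rewrite mulr_sumr; apply: eq_bigr => y _.
    rewrite mulr_sumr; apply: eq_bigr => y' _; field; by rewrite hr.
  rewrite exchange_big /=; apply: eq_bigr => y _.
  rewrite exchange_big /=; apply: eq_bigr => y' _.
  by rewrite mulr_sumr.
have Hd : \sum_y (lam y / 2) * \sum_w \sum_w' (v y w * 1) * (v y w' * 1) * Q w w'
   = \sum_w \sum_w' (Q w w' / 2) * \sum_y lam y * v y w * v y w'.
  transitivity (\sum_y \sum_w \sum_w' (Q w w' / 2) * (lam y * v y w * v y w')).
    apply: eq_bigr => y _; rewrite mulr_sumr; apply: eq_bigr => w _.
    rewrite mulr_sumr; apply: eq_bigr => w' _; by field.
  rewrite exchange_big /=; apply: eq_bigr => w _.
  rewrite exchange_big /=; apply: eq_bigr => w' _.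
  by rewrite mulr_sumr.
have He : \sum_y \sum_y' (Q y y' / 2) * \sum_x G x y * G x y' * (rho x)^-1 +
    \sum_w \sum_w' (Q w w' / 2) * \sum_y lam y * v y w * v y w' = beta / 2 * E.
  rewrite -big_split /=.
  transitivity (\sum_w \sum_w' (Q w w' / 2 * c w) * (w' == w)%:R).
    apply: eq_bigr => w _; rewrite -big_split /=; apply: eq_bigr => w' _.
    by rewrite -hdec -mulrDr addrC subrK eq_sym; ring.
  rewrite hc mulr_suml mulr_suml; apply: eq_bigr => w _.
  rewrite (bigD1 w) //= eqxx mulr1 big1 ?addr0 ?hQ; last first.
    by move=> w' /negPf ->; rewrite mulr0.
  by ring.
rewrite Ha Hb Hc Hd -(addrA (beta / 2 * E - _)) He.
by field.
Qed.

Lemma schur_psd (R : realType) (IA IB : finType) (Gm : xor_game R IA IB)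
  (r : IA -> R) (c : IB -> R) :
  (forall x, 0 < r x) -> psd (block_mx_rc Gm r c) ->
  psd (fun w w' => (w == w')%:R * c w - \sum_x cost Gm x w * cost Gm x w' * (r x)^-1).
Proof.
move=> rpos [_ Bp]; set G := cost Gm.
have rnz x : r x != 0 by rewrite gt_eqF.
split.
  move=> w w' /=; have [->|ne] := eqVneq w w'; first by [].
  rewrite !mul0r; congr (_ - _); apply: eq_bigr => x _; ring.
move=> z.
pose g x := \sum_y G x y * z y.
pose u x := g x * (r x)^-1.
pose Z (i : IA + IB) := match i with inl x => u x | inr y => z y end.
have H := Bp Z.
have HE : \sum_i \sum_j Z i * block_mx_rc Gm r c i j * Z j =
   (\sum_x \sum_x' u x * (if x == x' then r x else 0) * u x' + \sum_x \sum_y u x * (- G x y) * z y)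
 + (\sum_y \sum_x z y * (- G x y) * u x + \sum_y \sum_y' z y * (if y == y' then c y else 0) * z y').
  rewrite big_sumType; apply: congr2.
    rewrite -big_split; apply: eq_bigr => x _; rewrite big_sumType //.
  rewrite -big_split; apply: eq_bigr => y _; rewrite big_sumType //.
have B1 : \sum_x \sum_x' u x * (if x == x' then r x else 0) * u x' = \sum_x g x ^+ 2 / r x.
  apply: eq_bigr => x _; rewrite (bigD1 x) //= eqxx big1 ?addr0.
    by rewrite /u; field.
  by move=> x' /negPf; rewrite eq_sym => ->; rewrite mulr0 mul0r.
have B2 : \sum_x \sum_y u x * (- G x y) * z y = - \sum_x g x ^+ 2 / r x.
  rewrite -sumrN; apply: eq_bigr => x _.
  rewrite (eq_bigr (fun y => - u x * (G x y * z y))); last by move=> y _; ring.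
  by rewrite -mulr_sumr /u -/(g x); field.
have B3 : \sum_y \sum_x z y * (- G x y) * u x = - \sum_x g x ^+ 2 / r x.
  rewrite exchange_big /= -B2; apply: eq_bigr => x _; apply: eq_bigr => y _; ring.
have B4 : \sum_y \sum_y' z y * (if y == y' then c y else 0) * z y' = \sum_y c y * z y ^+ 2.
  apply: eq_bigr => y _; rewrite (bigD1 y) //= eqxx big1 ?addr0; first by ring.
  by move=> y' /negPf; rewrite eq_sym => ->; rewrite mulr0 mul0r.
move: H; rewrite HE B1 B2 B3 B4 => H.
have -> : \sum_w \sum_w' z w * ((w == w')%:R * c w -
      \sum_x G x w * G x w' * (r x)^-1) * z w'
   = \sum_y c y * z y ^+ 2 - \sum_x g x ^+ 2 / r x.
  transitivity (\sum_w \sum_w' z w * ((w == w')%:R * c w) * z w' -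
      \sum_w \sum_w' \sum_x z w * G x w * (G x w' * z w') * (r x)^-1).
    rewrite -sumrB; apply: eq_bigr => w _; rewrite -sumrB; apply: eq_bigr => w' _.
    rewrite mulrBr mulrBl; congr (_ - _).
    by rewrite mulr_sumr mulr_suml; apply: eq_bigr => x _; ring.
  congr (_ - _).
    apply: eq_bigr => w _; rewrite (bigD1 w) //= eqxx big1 ?addr0; last first.
      by move=> w' /negPf; rewrite eq_sym => ->; rewrite mul0r mulr0 mul0r.
    by rewrite mul1r; ring.
  transitivity (\sum_w \sum_x \sum_w' z w * G x w * (G x w' * z w') * (r x)^-1).
    by apply: eq_bigr => w _; rewrite exchange_big.
  rewrite exchange_big /=; apply: eq_bigr => x _.
  transitivity ((\sum_w z w * G x w) * (\sum_w' G x w' * z w') * (r x)^-1).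
    by rewrite big_distrlr mulr_suml; apply: eq_bigr => w _; rewrite mulr_suml.
  rewrite (eq_bigr (fun w => G x w * z w)); last by move=> w _; rewrite mulrC.
  by rewrite -/(g x) expr2.
lra.
Qed.

Section Main.
Variables (R : realType) (IA IB : finType).
Local Notation C := R[i].
Local Open Scope complex_scope.

Lemma ReD (a b : C) : complex.Re (a + b) = complex.Re a + complex.Re b.
Proof. by case: a; case: b. Qed.

Lemma Re_sum (J : Type) (s : seq J) (F : J -> C) :
  complex.Re (\sum_(i <- s) F i) = \sum_(i <- s) complex.Re (F i).
Proof.
elim: s => [|a s IH]; first by rewrite !big_nil.
by rewrite !big_cons ReD IH.
Qed.

Lemma coef_one g : scen_coef (scen1 R IA IB) g = ind ([::], [::]) g.
Proof. by rewrite coefE big_cons big_nil /= mul1r addr0. Qed.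

Lemma coef_bias (Gm : xor_game R IA IB) g : scen_coef (bias_poly Gm) g =
  \sum_x \sum_y (cost Gm x y)%:C%C * ind ([:: x], [:: y]) g.
Proof.
rewrite /bias_poly coef_sum big_enum; apply: eq_bigr => x _.
rewrite coef_sum big_enum; apply: eq_bigr => y _.
by rewrite coef_scale coef_mul !big_cons !big_nil /= !mul1r !addr0.
Qed.
End Main.

Theorem mainTheorem6 (R : realType) (IA IB : finType)
    (Gm : xor_game R IA IB) (S : qstrategy R IA IB) :
  valid_game Gm ->
  optimal_strategy Gm S ->
  (* standing facts (Tsirelson, Slofstra) about the optimal row/column biases *)
  (forall x : IA, 0 < row_bias Gm S x) ->
  psd (block_mx_rc Gm (row_bias Gm S) (col_bias Gm S)) ->
  exists (lam : IB -> R) (v : IB -> IB -> R),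
    (forall y, 0 <= lam y) /\
    scen_eq
      (scen_sub (scen_scale (qbias Gm S)%:C%C (scen1 R IA IB)) (bias_poly Gm))
      (scen_add
        (scen_sum (enum IA) (fun x =>
           scen_scale (row_bias Gm S x / 2)%:C%C
             (scen_sq (scen_sub (gen_a R IB x) (hat_b Gm (row_bias Gm S) x)))))
        (scen_sum (enum IB) (fun y =>
           scen_scale (lam y / 2)%:C%C
             (scen_sq (scen_sum (enum IB) (fun w =>
                scen_scale (v y w)%:C%C (gen_b R IA w))))))).
Proof.
move=> _ _ rpos Bpsd.
have [lam [v [lam0 Hdec]]] := @psd_decomp _ _ _ (@schur_psd _ _ _ Gm _ _ rpos Bpsd).
exists lam, v; split=> // g.
have hb : qbias Gm S = \sum_x row_bias Gm S x by rewrite /qbias Re_sum.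
have hc : qbias Gm S = \sum_y col_bias Gm S y.
  by rewrite /qbias exchange_big Re_sum.
have hbC : (qbias Gm S)%:C%C = \sum_x (row_bias Gm S x)%:C%C by rewrite hb rmorph_sum.
have hcC : (qbias Gm S)%:C%C = \sum_y (col_bias Gm S y)%:C%C by rewrite hc rmorph_sum.
have hrC : forall x, (row_bias Gm S x)%:C%C != 0.
  by move=> x; rewrite fmorph_eq0 gt_eqF.
have hQ (q : IB) : ind (R:=R) (([::] : seq IA), [:: q; q]) g = ind (R:=R) ([::], [::]) g.
  by rewrite /ind /nf /= eqxx.
have hdecC : forall w w', (w == w')%:R * (col_bias Gm S w)%:C%C -
    \sum_x (cost Gm x w)%:C%C * (cost Gm x w')%:C%C * ((row_bias Gm S x)%:C%C)^-1 =
    \sum_y (lam y)%:C%C * (v y w)%:C%C * (v y w')%:C%C.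
  move=> w w'.
  have -> : \sum_y (lam y)%:C%C * (v y w)%:C%C * (v y w')%:C%C =
      ((\sum_y lam y * v y w * v y w')%:C%C)%C.
    by rewrite rmorph_sum; apply: eq_bigr => y _; rewrite !rmorphM.
  rewrite -Hdec /= rmorphB rmorphM rmorph_nat rmorph_sum; congr (_ - _).
  by apply: eq_bigr => x _; rewrite !rmorphM fmorphV.
rewrite /scen_sub !coef_add !coef_scale coef_one coef_bias !coef_sum.
rewrite [in RHS](eq_bigr (fun x => ((row_bias Gm S x)%:C%C / 2) *
   (ind ([::], [::]) g + 2 * \sum_y (-1 * (((row_bias Gm S x)%:C%C)^-1 * ((cost Gm x y)%:C%C * 1))) * ind ([:: x], [:: y]) g
    + \sum_y \sum_y' (-1 * (((row_bias Gm S x)%:C%C)^-1 * ((cost Gm x y)%:C%C * 1))) *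
         (-1 * (((row_bias Gm S x)%:C%C)^-1 * ((cost Gm x y')%:C%C * 1))) * ind (([::] : seq IA), [:: y; y']) g))); last first.
  move=> x _; have := @lin_a _ _ _ Gm (row_bias Gm S) x; rewrite /scen_sub => ->.
  by rewrite coef_scale coef_sq_a rmorphM !fmorphV rmorph_nat.
rewrite [in RHS](eq_bigr (fun y => ((lam y)%:C%C / 2) *
   \sum_w \sum_w' ((v y w)%:C%C * 1) * ((v y w')%:C%C * 1) * ind (([::] : seq IA), [:: w; w']) g)); last first.
  by move=> y _; rewrite coef_scale lin_b coef_sq_b rmorphM fmorphV rmorph_nat.
rewrite !big_enum /= mulN1r.
exact: (@final_alg _ IA IB (qbias Gm S)%:C%C (fun x => (row_bias Gm S x)%:C%C)
  (fun y => (col_bias Gm S y)%:C%C) (fun x y => (cost Gm x y)%:C%C)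
  (fun y => (lam y)%:C%C) (fun y w => (v y w)%:C%C) (ind ([::], [::]) g)
  (fun x y => ind ([:: x], [:: y]) g) (fun y y' => ind (([::] : seq IA), [:: y; y']) g)
  hbC hcC hrC hQ hdecC).
Qed.
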